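(* Let $p,q,s,u,v,w,t$ be parameters and let $(a_n)_{n\ge0}$ be defined by $a_0=1$, $a_1=p$, $a_2=q$, $a_3=s$ and, for $n\ge4$, $$a_n=u\,a_{n-1}+v\,a_{n-2}+w\,a_{n-3}+t\sum_{k=1}^{n-4}a_ka_{n-k-3}.$$ Let $N(x)=1+(p-u)x-(v+pu-q)x^2-(w-s-t+qu+pv)x^3$ and $D(x)=1-ux-vx^2-(w-2t)x^3$. Then the generating function $\sum_{n\ge0}a_nx^n$ equals $$\left(\frac{N(x)}{D(x)},\ \frac{tx^3N(x)}{D(x)^2}\right)\cdot c(x)=\frac{N(x)}{D(x)}\,c\!\left(\frac{tx^3N(x)}{D(x)^2}\right).$$
   Context: $c(x)=\frac{1-\sqrt{1-4x}}{2x}$ is the generating function of the Catalan numbers. For power series $g(x)$ with $g(0)\neq0$ and $f(x)$ with $f(0)=0$, the Riordan array $(g,f)$ acts on a power series $h(x)$ by $(g,f)\cdot h(x)=g(x)h(f(x))$. *)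

(* Defs.v *)
From HB Require Import structures.
From mathcomp Require Import all_boot all_order all_algebra.
Set Implicit Arguments. Unset Strict Implicit. Unset Printing Implicit Defensive.
Import Order.TTheory GRing.Theory Num.Theory.
Local Open Scope ring_scope.

Definition fps (R : Type) := nat -> R.

Section FPS.
Variable R : comRingType.

Definition fps_mul (f g : fps R) : fps R :=
  fun n => \sum_(i < n.+1) f i * g (n - i)%N.

Definition fps_one : fps R := fun n => if n == 0%N then 1 else 0.

Fixpoint fps_pow (f : fps R) (k : nat) : fps R :=
  if k is k'.+1 then fps_mul f (fps_pow f k') else fps_one.

(* Composition h(f(x)), meaningful when f 0 = 0 (then f^k has order >= k,
   so only k <= n contribute to the n-th coefficient). *)
Definition fps_comp (h f : fps R) : fps R :=
  fun n => \sum_(k < n.+1) h k * fps_pow f k n.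

(* Multiplicative inverse of a series with constant term 1:
   1/f = sum_k (1 - f)^k. *)
Definition fps_inv1 (f : fps R) : fps R :=
  fps_comp (fun _ => 1) (fun n => fps_one n - f n).

Definition poly_fps (P : {poly R}) : fps R := fun n => P`_n.

Definition riordan_act (g f h : fps R) : fps R := fps_mul g (fps_comp h f).
End FPS.

Definition catalan (n : nat) : nat := 'C(n.*2, n) %/ n.+1.

(* c(x) = (1 - sqrt(1-4x))/(2x) = sum_n C_n x^n *)
Definition catalan_gf (R : comRingType) : fps R := fun n => (catalan n)%:R.

(* Main.v *)
Require Import Defs.
From mathcomp Require Import all_boot all_order all_algebra.
From mathcomp Require Import zify ring lra.
Import GRing.Theory.

Lemma catE n : catalan n = 'C(n.*2, n) - 'C(n.*2, n.+1).
Proof.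
have h := mul_bin_left n.*2 n.
have e : (n.*2 - n = n)%N by lia.
rewrite e in h.
have hc : 'C(n.*2, n) = n.+1 * ('C(n.*2, n) - 'C(n.*2, n.+1)).
  rewrite mulnBr h. lia.
by rewrite /catalan {1}hc mulKn.
Qed.

Lemma cat_mul n : catalan n * n.+1 = 'C(n.*2, n).
Proof.
have h := mul_bin_left n.*2 n.
have e : (n.*2 - n = n)%N by lia.
rewrite e in h. rewrite catE mulnC mulnBr h. lia.
Qed.

Lemma cat_rec n : catalan n.+1 * n.+2 = catalan n * (4 * n + 2).
Proof.
have h1 := mul_bin_diag (n.+1).*2 n.
have h2 := mul_bin_down (n.*2).+1 n.
have e1 : ((n.+1).*2.-1 = (n.*2).+1)%N by lia.
have e2 : ((n.*2).+1.-1 = n.*2)%N by lia.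
have e3 : ((n.*2).+1 - n = n.+1)%N by lia.
rewrite e1 in h1; rewrite e2 e3 in h2.
have key : n.+1 * 'C((n.+1).*2, n.+1) = (4 * n + 2) * 'C(n.*2, n).
  apply/eqP; rewrite -(eqn_pmul2l (ltn0Sn n)) -h1.
  have -> : (n.+1).*2 = 2 * n.+1 by lia.
  rewrite -mulnA -h2. apply/eqP; lia.
apply/eqP; rewrite -(eqn_pmul2r (ltn0Sn n)).
rewrite (cat_mul n.+1) -mulnA [(_ + 2) * _]mulnC mulnA (cat_mul n) mulnC key.
by rewrite mulnC.
Qed.

Notation c := catalan.

Lemma cat_sym n : \sum_(i < n.+1) i * (c i * c (n - i))
  = \sum_(i < n.+1) (n - i) * (c i * c (n - i)).
Proof.
rewrite (reindex_inj rev_ord_inj) /=.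
apply: eq_bigr => i _.
have hi := ltn_ord i.
have -> : (n.+1 - i.+1 = n - i)%N by lia.
have -> : (n - (n - i) = i)%N by lia.
by rewrite [c (n - i) * _]mulnC.
Qed.

Lemma cat_S0S1 n : 2 * \sum_(i < n.+1) i * (c i * c (n - i))
  = n * \sum_(i < n.+1) c i * c (n - i).
Proof.
rewrite mul2n -addnn {2}cat_sym -big_split big_distrr /=.
apply: eq_bigr => i _. have hi := ltn_ord i. rewrite -mulnDl. congr (_ * _). lia.
Qed.

Lemma cat_D n : (\sum_(i < n.+2) c i * c (n.+1 - i)) * n.+3
  = 2 * c n.+1 + 4 * n.+1 * \sum_(i < n.+1) c i * c (n - i).
Proof.
set S0 := \sum_(i < n.+1) c i * c (n - i).
have L1 : (\sum_(i < n.+2) c i * c (n.+1 - i)) * n.+3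
    = 2 * \sum_(i < n.+2) i.+1 * (c i * c (n.+1 - i)).
  have := cat_S0S1 n.+1.
  have -> : \sum_(i < n.+2) i.+1 * (c i * c (n.+1 - i))
     = \sum_(i < n.+2) i * (c i * c (n.+1 - i)) + \sum_(i < n.+2) (c i * c (n.+1 - i)).
    by rewrite -big_split /=; apply: eq_bigr => i _; rewrite mulSn addnC.
  move=> h. rewrite mulnDr h. lia.
have L2 : \sum_(i < n.+2) i.+1 * (c i * c (n.+1 - i))
    = c n.+1 + 2 * n.+1 * S0.
  rewrite big_ord_recl /= mul1n.
  have -> : c 0 = 1 by [].
  rewrite mul1n subn0. congr (_ + _).
  have h := cat_S0S1 n.
  have -> : \sum_(i < n.+1) (bump 0 i).+1 * (c (bump 0 i) * c (n.+1 - bump 0 i))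
     = \sum_(i < n.+1) (4 * i + 2) * (c i * c (n - i)).
    apply: eq_bigr => i _. rewrite /bump /= add1n subSS.
    rewrite mulnA [_ * c i.+1]mulnC cat_rec. lia.
  have -> : \sum_(i < n.+1) (4 * i + 2) * (c i * c (n - i))
     = 2 * (2 * \sum_(i < n.+1) i * (c i * c (n - i))) + 2 * S0.
    rewrite !big_distrr -big_split /=. apply: eq_bigr => i _. lia.
  rewrite h /S0. lia.
rewrite L1 L2. lia.
Qed.

Lemma cat_conv n : c n.+1 = \sum_(i < n.+1) c i * c (n - i).
Proof.
elim: n => [|n IH]; first by rewrite big_ord1.
apply/eqP; rewrite -(eqn_pmul2r (ltn0Sn n.+2)) cat_D -IH cat_rec.
apply/eqP; lia.
Qed.

Local Open Scope ring_scope.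
Set Implicit Arguments. Unset Strict Implicit.

Section P.
Variable R : comRingType.
Implicit Types P Q F : {poly R}.

Definition og (m : nat) P := exists Q, P = 'X^m * Q.
Definition rep m (f : fps R) P := forall i, (i < m)%N -> f i = P`_i.

Lemma og_coef m P i : og m P -> (i < m)%N -> P`_i = 0.
Proof. by move=> [Q ->] h; rewrite coefXnM h. Qed.

Lemma coef_og m P : (forall i, (i < m)%N -> P`_i = 0) -> og m P.
Proof.
move=> h; exists (drop_poly m P).
rewrite -{1}(poly_take_drop m P).
have -> : take_poly m P = 0.
  by apply/polyP => i; rewrite coef_take_poly coef0; case: ifP => // /h.
by rewrite add0r mulrC.
Qed.

Lemma og0 m : og m 0. Proof. by exists 0; rewrite mulr0. Qed.
Lemma ogD m P Q : og m P -> og m Q -> og m (P + Q).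
Proof. by move=> [A ->] [B ->]; exists (A + B); rewrite mulrDr. Qed.
Lemma ogN m P : og m P -> og m (- P).
Proof. by move=> [A ->]; exists (- A); rewrite mulrN. Qed.
Lemma ogB m P Q : og m P -> og m Q -> og m (P - Q).
Proof. by move=> h1 h2; apply: ogD => //; apply: ogN. Qed.
Lemma ogMl m P Q : og m P -> og m (Q * P).
Proof. by move=> [A ->]; exists (Q * A); rewrite mulrCA. Qed.
Lemma ogMr m P Q : og m P -> og m (P * Q).
Proof. by move=> h; rewrite mulrC; apply: ogMl. Qed.
Lemma og_le k m P : (k <= m)%N -> og m P -> og k P.
Proof.
move=> hk [A ->]; exists ('X^(m - k) * A).
by rewrite mulrA -exprD subnKC.
Qed.
Lemma og_mul a b P Q : og a P -> og b Q -> og (a + b) (P * Q).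
Proof.
move=> [A ->] [B ->]; exists (A * B); rewrite exprD.
by rewrite -!mulrA; congr (_ * _); rewrite mulrCA.
Qed.
Lemma og_exp k P : og 1 P -> og k (P ^+ k).
Proof.
move=> h; elim: k => [|k IH]; first by exists 1; rewrite !expr0 mulr1.
by rewrite exprS -add1n; apply: og_mul.
Qed.
Lemma og_X k : og k ('X^k). Proof. by exists 1; rewrite mulr1. Qed.
Lemma og_sum m (I : Type) (r : seq I) (F : I -> {poly R}) :
  (forall i, og m (F i)) -> og m (\sum_(i <- r) F i).
Proof.
move=> h; elim: r => [|x r IH]; first by rewrite big_nil; apply: og0.
by rewrite big_cons; apply: ogD.
Qed.
Lemma og_comp m P F : og m P -> og 1 F -> og m (P \Po F).
Proof.
move=> [A ->] hF; rewrite comp_polyM.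
have -> : 'X^m \Po F = F ^+ m by rewrite rmorphXn /= comp_polyX.
by apply: ogMr; apply: og_exp.
Qed.
Lemma og1_of P : P`_0 = 0 -> og 1 P.
Proof. by move=> h; apply: coef_og => -[|i] // _. Qed.

Lemma rep_mul m f g P Q : rep m f P -> rep m g Q -> rep m (fps_mul f g) (P * Q).
Proof.
move=> hf hg i hi; rewrite /fps_mul coefM; apply: eq_bigr => j _.
have hj := ltn_ord j.
have h1 : (j < m)%N by lia.
have h2 : (i - j < m)%N by lia.
by rewrite hf // hg.
Qed.
Lemma rep_one m : rep m (@fps_one R) 1.
Proof. by move=> [|i] _; rewrite /fps_one coef1. Qed.
Lemma rep_pow m f P k : rep m f P -> rep m (fps_pow f k) (P ^+ k).
Proof.
move=> h; elim: k => [|k IH] /=; first by rewrite expr0; apply: rep_one.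
by rewrite exprS; apply: rep_mul.
Qed.
Lemma rep_comp m h f P : rep m f P -> og 1 P ->
  rep m (fps_comp h f) (\sum_(k < m) h k *: P ^+ k).
Proof.
move=> hf hP i hi; rewrite /fps_comp coef_sum.
rewrite (big_ord_widen m (fun k => h k * fps_pow f k i)) //.
rewrite big_mkcond /=; apply: eq_bigr => k _.
rewrite coefZ; case: ifP => hk.
  by rewrite (rep_pow k hf).
by rewrite (og_coef (og_exp k hP)) ?mulr0 //; lia.
Qed.
Lemma rep_poly m P : rep m (poly_fps P) P. Proof. by []. Qed.
Lemma rep_inv m f P : rep m f P -> P`_0 = 1 ->
  rep m (fps_inv1 f) (\sum_(k < m) (1 - P) ^+ k).
Proof.
move=> hf h0; rewrite /fps_inv1.
have h1 : rep m (fun n => fps_one R n - f n) (1 - P).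
  by move=> i hi; rewrite coefB hf //; congr (_ - _); apply: rep_one.
have := rep_comp (fun _ => 1) h1.
have -> : \sum_(k < m) (fun _ : nat => (1:R)) k *: (1 - P) ^+ k = \sum_(k < m) (1 - P) ^+ k.
  by apply: eq_bigr => k _; rewrite scale1r.
apply; apply: og1_of; by rewrite coefB coef1 h0 subrr.
Qed.
Lemma inv_og m P : P`_0 = 1 -> og m (P * \sum_(k < m) (1 - P) ^+ k - 1).
Proof.
move=> h0.
have E : P * \sum_(k < m) (1 - P) ^+ k - 1 = - (1 - P) ^+ m.
  have := subrX1 (1 - P) m.
  have -> : 1 - P - 1 = - P by rewrite addrC addKr.
  rewrite mulNr => h.
  have -> : P * \sum_(k < m) (1 - P) ^+ k = 1 - (1 - P) ^+ m.
    by rewrite -[P * _]opprK -h opprB.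
  by rewrite addrAC subrr add0r.
rewrite E; apply: ogN; apply: og_exp; apply: og1_of.
by rewrite coefB coef1 h0 subrr.
Qed.
End P.

Lemma cat_og (R : comRingType) m (F : {poly R}) : og 1 F ->
  og m (\sum_(k < m) (catalan k)%:R *: F ^+ k - 1
        - F * (\sum_(k < m) (catalan k)%:R *: F ^+ k) ^+ 2).
Proof.
move=> hF.
pose Cp : {poly R} := \poly_(k < m) (catalan k)%:R.
have hC : Cp \Po F = \sum_(k < m) (catalan k)%:R *: F ^+ k.
  rewrite /Cp poly_def linear_sum /=; apply: eq_bigr => k _.
  by rewrite comp_polyZ rmorphXn /= comp_polyX.
have h0 : og m (Cp - 1 - 'X * Cp ^+ 2).
  apply: coef_og => i hi.
  rewrite !coefB coefXM coef1 coef_poly hi.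
  case: i hi => [|i] hi /=; first by rewrite subrr subr0.
  rewrite subr0 expr2 coefM (cat_conv i) natr_sum.
  apply/eqP; rewrite subr_eq0; apply/eqP; apply: eq_bigr => j _.
  have hj := ltn_ord j.
  rewrite !coef_poly ifT; last by lia.
  by rewrite ifT ?natrM //; lia.
have := og_comp h0 hF.
by rewrite !rmorphB rmorph1 rmorphM rmorphXn /= comp_polyX hC.
Qed.

Lemma uniq_og (R : comRingType) m (D N T X Y : {poly R}) :
  D`_0 = 1 -> og 1 T ->
  og m (D * X - N - T * X ^+ 2) -> og m (D * Y - N - T * Y ^+ 2) -> og m (X - Y).
Proof.
move=> hD hT hX hY.
pose Z := D - T * (X + Y).
have hZ : Z`_0 = 1 by rewrite coefB coef0M (og_coef hT) // mul0r subr0.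
pose W := \sum_(k < m) (1 - Z) ^+ k.
have hW := inv_og m hZ.
have -> : X - Y = ((D * X - N - T * X ^+ 2) - (D * Y - N - T * Y ^+ 2)) * W
   - (X - Y) * (Z * W - 1) by rewrite /Z; ring.
apply: ogB; [apply: ogMr; exact: ogB | exact: ogMl].
Qed.

Lemma alg_og (R : comRingType) m (D N T Di D2i Cf : {poly R}) :
  og m (D * Di - 1) -> og m (D ^+ 2 * D2i - 1) ->
  og m (Cf - 1 - (T * N * D2i) * Cf ^+ 2) ->
  og m (D * (N * Di * Cf) - N - T * (N * Di * Cf) ^+ 2).
Proof.
set e1 := D * Di - 1; set e2 := D ^+ 2 * D2i - 1; set e3 := Cf - 1 - _.
move=> h1 h2 h3.
pose d := Di ^+ 2 - D2i.
have hd : og m d.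
  have -> : d = D2i * (e1 * (2%:R + e1) - e2) - e2 * d by rewrite /d /e1 /e2; ring.
  apply: ogB; last exact: ogMr.
  apply: ogMl; apply: ogB => //; exact: ogMr.
have -> : D * (N * Di * Cf) - N - T * (N * Di * Cf) ^+ 2
   = N * e3 + N * Cf * e1 - T * N ^+ 2 * Cf ^+ 2 * d.
  by rewrite /e1 /e3 /d; ring.
apply: ogB; [apply: ogD; apply: ogMl => // | apply: ogMl => //].
Qed.

Unset Implicit Arguments. Set Strict Implicit.

Theorem mainTheorem7 (R : comRingType) (p q s u v w t : R) (a : nat -> R) :
  a 0%N = 1 -> a 1%N = p -> a 2%N = q -> a 3%N = s ->
  (forall n : nat, (4 <= n)%N ->
     a n = u * a n.-1 + v * a (n - 2)%N + w * a (n - 3)%N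
           + t * \sum_(1 <= k < n - 3) a k * a (n - k - 3)%N) ->
  let N : {poly R} := Poly [:: 1; p - u; - (v + p * u - q);
                              - (w - s - t + q * u + p * v)] in
  let D : {poly R} := Poly [:: 1; - u; - v; - (w - 2%:R * t)] in
  let g : fps R := fps_mul (poly_fps N) (fps_inv1 (poly_fps D)) in
  let f : fps R := fps_mul (poly_fps (t *: 'X^3 * N))
                           (fps_inv1 (poly_fps (D ^+ 2))) in
  forall n : nat, a n = riordan_act g f (catalan_gf R) n.
Proof.
move=> Ha0 Ha1 Ha2 Ha3 Hrec N D g f n.
pose m := n.+1.
have hD0 : D`_0 = 1 by rewrite coef_Poly.
have hD20 : (D ^+ 2)`_0 = 1 by rewrite expr2 coef0M hD0 mulr1.
pose Di := \sum_(k < m) (1 - D) ^+ k.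
pose D2i := \sum_(k < m) (1 - D ^+ 2) ^+ k.
pose T : {poly R} := t *: 'X^3.
have hT : og 1 T.
  rewrite /T -mul_polyC; apply: ogMl; apply: (@og_le _ 1 3) => //; exact: og_X.
pose F := T * N * D2i.
have hF : og 1 F by apply: ogMr; apply: ogMr.
pose Cf := \sum_(k < m) (catalan k)%:R *: F ^+ k.
have rg : rep m g (N * Di) := rep_mul (@rep_poly _ m N) (rep_inv (@rep_poly _ m D) hD0).
have rf : rep m f F := rep_mul (@rep_poly _ m (t *: 'X^3 * N)) (rep_inv (@rep_poly _ m (D ^+ 2)) hD20).
have rC : rep m (fps_comp (catalan_gf R) f) Cf := rep_comp _ rf hF.
have ract : rep m (riordan_act g f (catalan_gf R)) (N * Di * Cf) := rep_mul rg rC.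
rewrite ract //.
have hB : og m (D * (N * Di * Cf) - N - T * (N * Di * Cf) ^+ 2).
  apply: alg_og; [exact: inv_og | exact: inv_og | exact: cat_og].
pose A : {poly R} := \poly_(i < m) a i.
have hA : og m (D * A - N - T * A ^+ 2).
  have hDe : D = 1 - 'X * u%:P - 'X^2 * v%:P - 'X^3 * (w - 2%:R * t)%:P.
    apply/polyP => i; rewrite coef_Poly !coefB coef1 coefXM !coefXnM !coefC.
    case: i => [|[|[|[|i]]]] /=.
    all: rewrite ?subr0 ?sub0r ?nth_nil //.
  apply: coef_og => i hi.
  have hAc : forall j, (j <= i)%N -> A`_j = a j.
    by move=> j hj; rewrite coef_poly ifT //; lia.
  rewrite hDe !mulrBl mul1r -!mulrA /T -scalerAl.
  rewrite !coefB !coefXM !coefCM coefZ coefXnM coef_Poly expr2 coefM.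
  case: i hi hAc => [|[|[|[|k]]]] hi hAc /=.
  - rewrite hAc // Ha0; ring.
  - rewrite !hAc // Ha0 Ha1; ring.
  - rewrite !hAc // Ha0 Ha1 Ha2; ring.
  - rewrite big_ord1 !hAc // Ha0 Ha1 Ha2 Ha3; ring.
  have e1 : (k.+4 - 3 = k.+1)%N by lia.
  rewrite e1 nth_nil.
  have hs : \sum_(j < k.+2) A`_j * A`_(k.+1 - j)%N
      = 2%:R * a k.+1 + \sum_(j < k) a j.+1 * a (k - j)%N.
    rewrite big_ord_recl big_ord_recr /=.
    rewrite /bump /= !add1n subn0 subSS subnn.
    have -> : \sum_(i < k) A`_i.+1 * A`_(k - i)%N = \sum_(j < k) a j.+1 * a (k - j)%N.
      apply: eq_bigr => i _; have hi' := ltn_ord i.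
      rewrite hAc; last lia. rewrite hAc; last lia. by [].
    rewrite hAc; last lia. rewrite hAc; last lia.
    rewrite Ha0; ring.
  rewrite hs.
  do 4! (rewrite hAc; last lia).
  rewrite (Hrec k.+4 isT) e1.
  have -> : \sum_(1 <= j < k.+1) a j * a (k.+4 - j - 3)%N
          = \sum_(j < k) a j.+1 * a (k - j)%N.
    rewrite big_add1 /= big_mkord; apply: eq_bigr => j _; congr (_ * a _); lia.
  have -> : (k.+4 - 2 = k.+2)%N by lia.
  rewrite /=; ring.
have := og_coef (uniq_og hD0 hT hB hA) (ltnSn n).
rewrite coefB coef_poly ltnSn => /eqP; rewrite subr_eq0 => /eqP ->.
by [].
Qed.
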